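(* Let $N\in\mathbb{N}$, $T>0$, $\underline t\ge0$, $\overline t=\underline t+NT$, $t_k=\underline t+kT$, let $\mathbf x_0,\dots,\mathbf x_N\in\mathbb{R}^n$ and let $\mathbf x_d$ be the associated Bézier trajectory with Bézier curves $r_k$ and control points $(\boldsymbol\zeta_k)_i$, $(\xi_k)_{n,i}$ (context). Let $\alpha,\beta\ge0$, $u_{\max}>0$, and let $\overline{\mathbf x}_0,\dots,\overline{\mathbf x}_{N-1}\in\mathcal X$. Suppose that for each $k=0,\dots,N-1$ there exists $\mathbf s_k\in\mathbb{R}^2_{\ge0}$ such that, for all $i=0,\dots,2n-1$, $$\begin{bmatrix}\|(\boldsymbol\zeta_k)_i-\overline{\mathbf x}_k\|_2\\ |(\xi_k)_{n,i}-f(\overline{\mathbf x}_k)|\end{bmatrix}\le\mathbf s_k\ \text{(elementwise)},\qquad \tfrac12\mathbf s_k^\top M_{\alpha,\beta}\mathbf s_k+N_{\alpha,\beta}(\overline{\mathbf x}_k)^\top\mathbf s_k+\Gamma_{\alpha,\beta}(\overline{\mathbf x}_k)\le u_{\max}.$$ Then for every $k$ and every $t\in[t_k,t_{k+1})$, $$\tfrac12\boldsymbol\sigma_{\mathbf x_d}(t)^\top M_{\alpha,\beta}\boldsymbol\sigma_{\mathbf x_d}(t)+N_{\alpha,\beta}(\overline{\mathbf x}_k)^\top\boldsymbol\sigma_{\mathbf x_d}(t)+\Gamma_{\alpha,\beta}(\overline{\mathbf x}_k)\le u_{\max},$$ where $\boldsymbol\sigma_{\mathbf x_d}(t)=\big(\|\mathbf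 x_d(t)-\overline{\mathbf x}_k\|_2,\ |r_k^{(n)}(t-t_k)-f(\overline{\mathbf x}_k)|\big)^\top$ for $t\in[t_k,t_{k+1})$ (note $r_k^{(n)}(t-t_k)$ is the last component of $\dot{\mathbf x}_d(t)$, right derivative at $t_k$).
   Context: $f,g:\mathbb{R}^n\to\mathbb{R}$ are continuously differentiable, $f(\mathbf 0)=0$, $g(\mathbf x)\ne0$ for all $\mathbf x$; $\mathcal X\subset\mathbb{R}^n$ is a compact convex polytope containing $\mathbf 0$ in its interior. $\mathbf K\in\mathbb{R}^n$ makes $F=A_0-e_n\mathbf K^\top$ Hurwitz ($A_0$ the $n\times n$ matrix with ones on the superdiagonal and zeros elsewhere, $e_n$ last basis vector); $Q\succ0$, $P\succ0$ solves $F^\top P+PF=-Q$, $\gamma=4\lambda_{\max}(P)^3/\lambda_{\min}(Q)^2$, $\overline w\ge0$, $\overline e=\sqrt{\gamma\overline w^2/\lambda_{\min}(P)}$. $M_{\alpha,\beta}=\pi_{\rm PSD}\!\left(\begin{bmatrix}2\alpha\beta&\beta\\\beta&0\end{bmatrix}\right)$ ($\pi_{\rm PSD}$: projection onto the PSD cone, zeroing negative eigenvalues); $N_{\alpha,\beta}(\overline{\mathbf x})=\big(2\alpha\beta\overline e+\alpha|g(\overline{\mathbf x})^{-1}|+\beta\|\mathbf K\|_2\overline e,\ |g(\overline{\mathbf x})^{-1}|+\beta\overline e\big)^\top$; $\Gamma_{\alpha,\beta}(\overline{\mathbf x})=\overline e(\beta\overline e+|g(\overline{\mathbf x})^{-1}|)(\alpha+\|\mathbf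 K\|_2)$. Bézier trajectory: with $z_i(\tau)=\binom{p}{i}(\tau/T)^i(1-\tau/T)^{p-i}$, a Bézier curve of order $p$ is $r=\boldsymbol\xi_0^\top\mathbf z$; with $S\in\mathbb{R}^{p\times(p+1)}$ ($S_{ii}=-p$, $S_{i,i+1}=p$), $R\in\mathbb{R}^{(p+1)\times p}$ ($R_{ii}=(p+1-i)/p$, $R_{i+1,i}=i/p$), other entries zero, $H=S^\top R^\top$, one has $r^{(j)}=\boldsymbol\xi_j^\top\mathbf z$ with $\boldsymbol\xi_j=T^{-j}(H^\top)^j\boldsymbol\xi_0$. For $k=0,\dots,N-1$, $r_k$ is the unique order-$(2n-1)$ Bézier curve with $r_k^{(j-1)}(0)=x_k^j$, $r_k^{(j-1)}(T)=x_{k+1}^j$, $j=1,\dots,n$; its control vectors are $(\boldsymbol\xi_k)_j$ with entries $(\xi_k)_{j,i}$, $i=0,\dots,2n-1$; $(\boldsymbol\zeta_k)_i=((\xi_k)_{0,i},\dots,(\xi_k)_{n-1,i})^\top$; $\mathbf r_k=(r_k,\dots,r_k^{(n-1)})^\top$; $\mathbf x_d(t)=\mathbf r_k(t-t_k)$ on $[t_k,t_{k+1})$, $\mathbf x_d(\overline t)=\mathbf x_N$. *)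

(* Defs.v *)
From HB Require Import structures.
From mathcomp Require Import all_boot all_order all_algebra.
From mathcomp Require Import all_classical all_reals all_analysis.
From mathcomp Require Import complex.
Set Implicit Arguments. Unset Strict Implicit. Unset Printing Implicit Defensive.
Import Order.TTheory GRing.Theory Num.Theory.
Import numFieldNormedType.Exports.
Local Open Scope classical_set_scope.
Local Open Scope ring_scope.

Section Defs.
Variable R : realType.

Definition norm2 (a b : nat) (v : 'M[R]_(a, b)) : R :=
  Num.sqrt (\sum_(i < a) \sum_(j < b) v i j ^+ 2).

Definition vec2 (a b : R) : 'cV[R]_2 :=
  \col_(i < 2) (if i == ord0 then a else b).

Definition mat2 (a b c d : R) : 'M[R]_2 :=
  \matrix_(i < 2, j < 2)
    (if i == ord0 then (if j == ord0 then a else b)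
                  else (if j == ord0 then c else d)).

(* B = pi_PSD(A): for a symmetric A = U diag(d) U^T with U orthogonal,
   B = U diag(max(d,0)) U^T  (negative eigenvalues zeroed) *)
Definition psd_proj (m : nat) (A B : 'M[R]_m) : Prop :=
  exists (U : 'M[R]_m) (d : 'rV[R]_m),
    U^T *m U = 1%:M /\
    A = U *m diag_mx d *m U^T /\
    B = U *m diag_mx (map_mx (fun x => Num.max x 0) d) *m U^T.

Definition posdef (m : nat) (A : 'M[R]_m) : Prop :=
  A^T = A /\ forall x : 'cV[R]_m, x != 0 -> 0 < (x^T *m A *m x) 0 0.

Definition lambda_max (m : nat) (A : 'M[R]_m) : R := sup [set a | eigenvalue A a].
Definition lambda_min (m : nat) (A : 'M[R]_m) : R := inf [set a | eigenvalue A a].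

Definition hurwitz (m : nat) (F : 'M[R]_m) : Prop :=
  forall z : R[i], eigenvalue (map_mx (fun x : R => (x%:C)%C) F) z -> complex.Re z < 0.

Definition A0 (n : nat) : 'M[R]_n := \matrix_(i < n, j < n) (j == i.+1 :> nat)%:R.
Definition e_last (n : nat) : 'cV[R]_n := \col_(i < n) (i == n.-1 :> nat)%:R.
Definition Fmat (n : nat) (K : 'cV[R]_n) : 'M[R]_n := A0 n - e_last n *m K^T.

Definition gammaP (n : nat) (P Q : 'M[R]_n) : R :=
  4 * lambda_max P ^+ 3 / lambda_min Q ^+ 2.
Definition ebar (n : nat) (P Q : 'M[R]_n) (wbar : R) : R :=
  Num.sqrt (gammaP P Q * wbar ^+ 2 / lambda_min P).

(* N_{alpha,beta}(xbar) and Gamma_{alpha,beta}(xbar), with g evaluated at xbar *)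
Definition Nab (n : nat) (alpha beta eb : R) (K : 'cV[R]_n) (gx : R) : 'cV[R]_2 :=
  vec2 (2 * alpha * beta * eb + alpha * `|gx^-1| + beta * norm2 K * eb)
       (`|gx^-1| + beta * eb).
Definition Gab (n : nat) (alpha beta eb : R) (K : 'cV[R]_n) (gx : R) : R :=
  eb * (beta * eb + `|gx^-1|) * (alpha + norm2 K).

Definition qcost (M : 'M[R]_2) (Nv : 'cV[R]_2) (G : R) (s : 'cV[R]_2) : R :=
  2^-1 * (s^T *m M *m s) 0 0 + (Nv^T *m s) 0 0 + G.

Definition C1 (n : nat) (f : 'rV[R]_n -> R) : Prop :=
  (forall x, differentiable f x) /\ (forall v : 'rV[R]_n, continuous ('D_v f)).

Definition polytope (n : nat) (X : set 'rV[R]_n) : Prop :=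
  exists (m : nat) (V : 'I_m -> 'rV[R]_n),
    X = [set x | exists w : 'I_m -> R, (forall i, 0 <= w i) /\
                 \sum_(i < m) w i = 1 /\ x = \sum_(i < m) w i *: V i].

Definition bp (n : nat) : nat := (2 * n).-1.

Definition bern (p : nat) (T tau : R) : 'cV[R]_p.+1 :=
  \col_(i < p.+1) ('C(p, i)%:R * (tau / T) ^+ i * (1 - tau / T) ^+ (p - i)).

(* S in R^{p x (p+1)}, R in R^{(p+1) x p} (0-based indices), H = S^T R^T *)
Definition Smat (p : nat) : 'M[R]_(p, p.+1) :=
  \matrix_(i < p, j < p.+1)
    (if (j == i :> nat) then - p%:R else if (j == i.+1 :> nat) then p%:R else 0).
Definition Rmat (p : nat) : 'M[R]_(p.+1, p) :=
  \matrix_(i < p.+1, j < p)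
    (if (i == j :> nat) then (p - j)%:R / p%:R
     else if (i == j.+1 :> nat) then (j.+1)%:R / p%:R else 0).
Definition Hmat (p : nat) : 'M[R]_p.+1 := (Smat p)^T *m (Rmat p)^T.

Definition bctrl (p : nat) (T : R) (xi0 : 'cV[R]_p.+1) (j : nat) : 'cV[R]_p.+1 :=
  T ^- j *: (((Hmat p)^T ^+ j) *m xi0).

Definition bderiv (p : nat) (T : R) (xi0 : 'cV[R]_p.+1) (j : nat) (tau : R) : R :=
  ((bctrl T xi0 j)^T *m bern p T tau) 0 0.

Definition zeta (n : nat) (T : R) (xi0 : 'cV[R]_(bp n).+1) (i : 'I_(bp n).+1) : 'rV[R]_n :=
  \row_(j < n) bctrl T xi0 j i 0.

Definition bvec (n : nat) (T : R) (xi0 : 'cV[R]_(bp n).+1) (tau : R) : 'rV[R]_n :=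
  \row_(j < n) bderiv T xi0 j tau.

End Defs.

(* Main.v *)
Require Import Defs.
From HB Require Import structures.
From mathcomp Require Import all_boot all_order all_algebra.
From mathcomp Require Import all_classical all_reals all_analysis.
From mathcomp Require Import complex.
From mathcomp Require Import ring lra.
Import Order.TTheory GRing.Theory Num.Theory.
Import numFieldNormedType.Exports.
Local Open Scope classical_set_scope.
Local Open Scope ring_scope.

Lemma bern_ge0 (R : realType) p (T tau : R) : 0 < T -> 0 <= tau <= T ->
  forall i, 0 <= bern p T tau i 0.
Proof.
move=> hT /andP[h0 h1] i; rewrite mxE.
have h2 : 0 <= tau / T by apply: divr_ge0 => //; exact: ltW.
have h3 : 0 <= 1 - tau / T by rewrite subr_ge0 ler_pdivrMr // mul1r.
apply: mulr_ge0; [apply: mulr_ge0|]; [by rewrite ler0n| exact: exprn_ge0| exact: exprn_ge0].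
Qed.

Lemma bern_sum (R : realType) p (T tau : R) : \sum_(i < p.+1) bern p T tau i 0 = 1.
Proof.
have e : (1 - tau / T + tau / T) ^+ p = 1 by rewrite subrK expr1n.
rewrite -e exprDn; apply: eq_bigr => i _; rewrite mxE -mulr_natl; ring.
Qed.

Lemma jensen (R : realFieldType) m (z a : 'I_m -> R) : (forall i, 0 <= z i) ->
  \sum_i z i = 1 -> (\sum_i z i * a i) ^+ 2 <= \sum_i z i * a i ^+ 2.
Proof.
move=> z0 z1; set mu := \sum_i z i * a i.
have h : 0 <= \sum_i z i * (a i - mu) ^+ 2.
  by apply: sumr_ge0 => i _; apply: mulr_ge0 => //; apply: sqr_ge0.
have e : \sum_i z i * (a i - mu) ^+ 2 =
   \sum_i z i * a i ^+ 2 - 2 * mu * \sum_i z i * a i + mu ^+ 2 * \sum_i z i.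
  rewrite (eq_bigr (fun i => z i * a i ^+ 2 - (2 * mu) * (z i * a i) + mu ^+ 2 * z i)).
    by rewrite big_split sumrB /= -!mulr_sumr.
  by move=> i _; rewrite /mu; ring.
rewrite e z1 -/mu in h; nra.
Qed.

Lemma diag_conj_ge0 (R : realType) m (U : 'M[R]_m) (e : 'rV[R]_m) :
  (forall j, 0 <= e 0 j) -> forall i, 0 <= (U *m diag_mx e *m U^T) i i.
Proof.
move=> he i; rewrite mul_mx_diag !mxE; apply: sumr_ge0 => k _; rewrite !mxE.
rewrite mulrAC -expr2; apply: mulr_ge0 => //; exact: sqr_ge0.
Qed.

Lemma M_props (R : realType) (a b : R) (M : 'M[R]_2) : 0 <= a -> 0 <= b ->
  psd_proj (mat2 a b b 0) M ->
  [/\ 0 <= M ord0 ord0, 0 <= M (lift ord0 ord0) (lift ord0 ord0),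
      0 <= M ord0 (lift ord0 ord0) & M (lift ord0 ord0) ord0 = M ord0 (lift ord0 ord0)].
Proof.
move=> ha hb [U [d [hU [hA hM]]]].
set A := mat2 a b b 0 in hA *.
set dm := \row_j (Num.max (d 0 j) 0 - d 0 j).
have dm0 : forall j, 0 <= dm 0 j.
  by move=> j; rewrite mxE subr_ge0 le_max lexx.
have dp0 : forall j, 0 <= (map_mx (fun x => Num.max x 0) d) 0 j.
  by move=> j; rewrite mxE le_max lexx orbT.
have eP : M - A = U *m diag_mx dm *m U^T.
  rewrite hM hA -mulmxBl -mulmxBr; congr (_ *m _ *m _).
  by apply/matrixP => i j; rewrite !mxE mulrnBl.
have eMP : M *m (M - A) = 0.
  rewrite eP hM !mulmxA -(mulmxA _ U^T U) hU mulmx1 -(mulmxA U) mulmx_diag.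
  have -> : \row_j ((map_mx (fun x => Num.max x 0) d) 0 j * dm 0 j) = 0.
    apply/matrixP => i j; rewrite !mxE.
    case: (leP 0 (d 0 j)) => h; last by rewrite mul0r.
    by rewrite subrr mulr0.
  have -> : diag_mx (0 : 'rV[R]_2) = 0 by apply/matrixP => i j; rewrite !mxE mul0rn.
  by rewrite mulmx0 mul0mx.
have sym : M^T = M.
  by rewrite hM !trmx_mul trmxK tr_diag_mx mulmxA.
have m00 : 0 <= M ord0 ord0 by rewrite hM; exact: diag_conj_ge0.
have m11 : 0 <= M (lift ord0 ord0) (lift ord0 ord0) by rewrite hM; exact: diag_conj_ge0.
have p00 : 0 <= (M - A) ord0 ord0 by rewrite eP; exact: diag_conj_ge0.
have s10 : M (lift ord0 ord0) ord0 = M ord0 (lift ord0 ord0).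
  by rewrite -[in RHS]sym mxE.
have e0 := congr1 (fun X : 'M[R]_2 => X ord0 ord0) eMP.
move: e0 p00; rewrite /= !mxE !big_ord_recl big_ord0 !mxE /= => e0 p00.
split => //.
rewrite s10 in e0.
nra.
Qed.

Lemma qcostE (R : realType) (M : 'M[R]_2) (Nv : 'cV[R]_2) G (s : 'cV[R]_2) :
  let i0 := ord0 : 'I_2 in let i1 := lift ord0 ord0 : 'I_2 in
  qcost M Nv G s = 2^-1 * (s i0 0 * (M i0 i0 * s i0 0 + M i0 i1 * s i1 0)
     + s i1 0 * (M i1 i0 * s i0 0 + M i1 i1 * s i1 0)) + (Nv i0 0 * s i0 0 + Nv i1 0 * s i1 0) + G.
Proof.
rewrite /qcost /= !mxE !big_ord_recl !big_ord0 !mxE !big_ord_recl !big_ord0 !mxE /=.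
ring.
Qed.

Lemma qcost_mono (R : realType) (M : 'M[R]_2) (Nv : 'cV[R]_2) G (s t : 'cV[R]_2) :
  let i0 := ord0 : 'I_2 in let i1 := lift ord0 ord0 : 'I_2 in
  0 <= M i0 i0 -> 0 <= M i1 i1 -> 0 <= M i0 i1 -> M i1 i0 = M i0 i1 ->
  0 <= Nv i0 0 -> 0 <= Nv i1 0 ->
  0 <= t i0 0 <= s i0 0 -> 0 <= t i1 0 <= s i1 0 ->
  qcost M Nv G t <= qcost M Nv G s.
Proof.
move=> i0 i1 h1 h2 h3 h4 h5 h6 /andP[h7 h8] /andP[h9 h10].
rewrite !qcostE -/i0 -/i1 h4.
have a1 : t i0 0 * t i0 0 <= s i0 0 * s i0 0 by apply: ler_pM.
have a2 : t i1 0 * t i1 0 <= s i1 0 * s i1 0 by apply: ler_pM.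
have a3 : t i0 0 * t i1 0 <= s i0 0 * s i1 0 by apply: ler_pM.
have b1 : M i0 i0 * (t i0 0 * t i0 0) <= M i0 i0 * (s i0 0 * s i0 0) by apply: ler_wpM2l.
have b2 : M i1 i1 * (t i1 0 * t i1 0) <= M i1 i1 * (s i1 0 * s i1 0) by apply: ler_wpM2l.
have b3 : M i0 i1 * (t i0 0 * t i1 0) <= M i0 i1 * (s i0 0 * s i1 0) by apply: ler_wpM2l.
have c1 : Nv i0 0 * t i0 0 <= Nv i0 0 * s i0 0 by apply: ler_wpM2l.
have c2 : Nv i1 0 * t i1 0 <= Nv i1 0 * s i1 0 by apply: ler_wpM2l.
lra.
Qed.

Lemma vec_bound (R : realType) n p (z : 'cV[R]_p.+1) (c : 'I_p.+1 -> 'rV[R]_n)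
  (xb : 'rV[R]_n) s0 :
  (forall i, 0 <= z i 0) -> \sum_i z i 0 = 1 -> 0 <= s0 ->
  (forall i, norm2 (c i - xb) <= s0) ->
  norm2 (\row_j (\sum_i c i 0 j * z i 0) - xb) <= s0.
Proof.
move=> z0 z1 hs0 hc.
have hc2 : forall i, \sum_j (c i 0 j - xb 0 j) ^+ 2 <= s0 ^+ 2.
  move=> i; have := hc i; rewrite /norm2 big_ord1.
  rewrite (eq_bigr (fun j => (c i 0 j - xb 0 j) ^+ 2)); last by move=> j _; rewrite !mxE.
  set x := \sum_j _ => h.
  have x0 : 0 <= x by apply: sumr_ge0 => j _; exact: sqr_ge0.
  rewrite -(sqr_sqrtr x0) !expr2; apply: ler_pM => //; exact: sqrtr_ge0.
rewrite /norm2 big_ord1 -(ger0_norm hs0) -sqrtr_sqr; apply: ler_wsqrtr.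
apply: (le_trans (y := \sum_j \sum_i z i 0 * (c i 0 j - xb 0 j) ^+ 2)).
  apply: ler_sum => j _; rewrite !mxE.
  have -> : \sum_i c i 0 j * z i 0 - xb 0 j = \sum_i z i 0 * (c i 0 j - xb 0 j).
    rewrite [RHS](eq_bigr (fun i => c i 0 j * z i 0 - xb 0 j * z i 0)); last by move=> i _; ring.
    by rewrite sumrB -mulr_sumr z1 mulr1.
  by apply: (@jensen _ _ (fun i => z i 0) (fun i => c i 0 j - xb 0 j)).
rewrite exchange_big /=.
apply: (le_trans (y := \sum_i z i 0 * s0 ^+ 2)).
  apply: ler_sum => i _; rewrite -mulr_sumr; apply: ler_wpM2l => //; exact: hc2.
by rewrite -mulr_suml z1 mul1r.
Qed.

Lemma sc_bound (R : realType) p (z : 'cV[R]_p.+1) (c : 'I_p.+1 -> R) (y s1 : R) :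
  (forall i, 0 <= z i 0) -> \sum_i z i 0 = 1 ->
  (forall i, `|c i - y| <= s1) ->
  `|\sum_i c i * z i 0 - y| <= s1.
Proof.
move=> z0 z1 hc.
have -> : \sum_i c i * z i 0 - y = \sum_i z i 0 * (c i - y).
  rewrite [RHS](eq_bigr (fun i => c i * z i 0 - y * z i 0)); last by move=> i _; ring.
  by rewrite sumrB -mulr_sumr z1 mulr1.
apply: (le_trans (ler_norm_sum _ _ _)).
apply: (le_trans (y := \sum_i z i 0 * s1)).
  apply: ler_sum => i _; rewrite normrM ger0_norm //; apply: ler_wpM2l => //; exact: hc.
by rewrite -mulr_suml z1 mul1r.
Qed.
Theorem lemma6 (R : realType) (n : nat) (hn : (0 < n)%N)
  (f g : 'rV[R]_n -> R) (hf : C1 f) (hg : C1 g) (f0 : f 0 = 0)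
  (gnz : forall x, g x != 0)
  (X : set 'rV[R]_n) (hX : polytope X) (hX0 : (X°) 0)
  (K : 'cV[R]_n) (hK : hurwitz (Fmat K))
  (Q P : 'M[R]_n) (hQ : posdef Q) (hP : posdef P)
  (hLyap : (Fmat K)^T *m P + P *m Fmat K = - Q)
  (wbar : R) (hw : 0 <= wbar)
  (N : nat) (T tlow : R) (hT : 0 < T) (htlow : 0 <= tlow)
  (x : nat -> 'rV[R]_n) (xi0 : nat -> 'cV[R]_(bp n).+1)
  (hxi : forall k : nat, (k < N)%N -> forall j : 'I_n,
      bderiv T (xi0 k) j 0 = x k 0 j /\ bderiv T (xi0 k) j T = x k.+1 0 j)
  (alpha beta umax : R) (ha : 0 <= alpha) (hb : 0 <= beta) (hu : 0 < umax)
  (M : 'M[R]_2) (hM : psd_proj (mat2 (2 * alpha * beta) beta beta 0) M)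
  (xbar : nat -> 'rV[R]_n) (hxbar : forall k, (k < N)%N -> X (xbar k))
  (hs : forall k : nat, (k < N)%N -> exists s : 'cV[R]_2,
      (forall i, 0 <= s i 0) /\
      (forall i : 'I_(bp n).+1,
         norm2 (zeta T (xi0 k) i - xbar k) <= s ord0 0 /\
         `|bctrl T (xi0 k) n i 0 - f (xbar k)| <= s (lift ord0 ord0) 0) /\
      qcost M (Nab alpha beta (ebar P Q wbar) K (g (xbar k)))
              (Gab alpha beta (ebar P Q wbar) K (g (xbar k))) s <= umax) :
  forall k : nat, (k < N)%N -> forall t : R,
    tlow + k%:R * T <= t < tlow + k.+1%:R * T ->
    qcost M (Nab alpha beta (ebar P Q wbar) K (g (xbar k)))
            (Gab alpha beta (ebar P Q wbar) K (g (xbar k)))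
          (vec2 (norm2 (bvec T (xi0 k) (t - (tlow + k%:R * T)) - xbar k))
                `|bderiv T (xi0 k) n (t - (tlow + k%:R * T)) - f (xbar k)|)
      <= umax.
Proof.
move=> k hk t /andP[ht1 ht2].
set tau := t - (tlow + k%:R * T).
have htau : 0 <= tau <= T.
  rewrite -addn1 natrD mulrDl mul1r in ht2.
  apply/andP; split; rewrite /tau; lra.
set z := bern (bp n) T tau.
have z0 : forall i, 0 <= z i 0 := @bern_ge0 R (bp n) T tau hT htau.
have z1 : \sum_i z i 0 = 1 by exact: bern_sum.
case: (hs k hk) => s [s0 [hsb hq]].
have hab : 0 <= 2 * alpha * beta by apply: mulr_ge0 => //; apply: mulr_ge0.
have [m00 m11 m01 m10] := @M_props R _ _ M hab hb hM.
have e0 : 0 <= ebar P Q wbar by exact: sqrtr_ge0.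
have nK : 0 <= norm2 K by exact: sqrtr_ge0.
apply: le_trans hq; apply: qcost_mono => //.
- rewrite !mxE /=.
  repeat (apply: addr_ge0 || apply: mulr_ge0 || apply: normr_ge0 || apply: ler0n || done).
- rewrite !mxE /=.
  repeat (apply: addr_ge0 || apply: mulr_ge0 || apply: normr_ge0 || apply: ler0n || done).
- rewrite !mxE /=; apply/andP; split; first exact: sqrtr_ge0.
  have -> : bvec T (xi0 k) tau = \row_j (\sum_i zeta T (xi0 k) i 0 j * z i 0).
    apply/matrixP => i j; rewrite !mxE /bderiv !mxE; apply: eq_bigr => l _; rewrite !mxE.
    by [].
  apply: vec_bound => //.
  by move=> i; case: (hsb i).
- rewrite !mxE /=; apply/andP; split; first exact: normr_ge0.
  have -> : bderiv T (xi0 k) n tau = \sum_i bctrl T (xi0 k) n i 0 * z i 0.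
    by rewrite /bderiv !mxE; apply: eq_bigr => l _; rewrite !mxE.
  apply: sc_bound => //.
  by move=> i; case: (hsb i).
Qed.
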